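(* Let $\mathfrak{g}$ be a Leibniz algebra and consider a commutative diagram of Leibniz algebras with exact rows $$\begin{array}{ccccccccc}0\to&\mathfrak{m}_1&\to&\mathfrak{p}_1&\to&\mathfrak{g}&\to0\\ &\downarrow\alpha&&\downarrow\beta&&\downarrow\gamma&\\ 0\to&\mathfrak{m}_2&\to&\mathfrak{p}_2&\to&\mathfrak{g}&\to0\end{array}$$ such that the bottom row is a $\mathrm{Lie}$-stem extension. If $\gamma$ is surjective, then $\beta$ is surjective.
   Context: Fix a field $\mathbb{K}$ with $\frac12\in\mathbb{K}$. A Leibniz algebra is a $\mathbb{K}$-vector space with a bilinear bracket satisfying $[x,[y,z]]=[[x,y],z]-[[x,z],y]$. $\mathfrak{p}^{\mathrm{ann}}$ is the span of all $[x,x]$, $\mathfrak{p}_{\mathrm{Lie}}=\mathfrak{p}/\mathfrak{p}^{\mathrm{ann}}$. $Z_{\mathrm{Lie}}(\mathfrak{p})=\{z:[x,z]+[z,x]=0\ \forall x\}$. An extension $0\to\mathfrak{m}\to\mathfrak{p}\to\mathfrak{g}\to0$ is a $\mathrm{Lie}$-stem extension if $\mathfrak{m}\subseteq Z_{\mathrm{Lie}}(\mathfrak{p})$ and the induced map $\mathfrak{p}_{\mathrm{Lie}}\to\mathfrak{g}_{\mathrm{Lie}}$ is an isomorphism (equivalently, $\mathfrak{m}\subseteq Z_{\mathrm{Lie}}(\mathfrak{p})\cap\mathfrak{p}^{\mathrm{ann}}$). *)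

(* Defs.v *)
From HB Require Import structures.
From mathcomp Require Import all_boot all_algebra.
Set Implicit Arguments. Unset Strict Implicit. Unset Printing Implicit Defensive.
Import GRing.Theory.
Local Open Scope ring_scope.

Definition surj (A B : Type) (f : A -> B) : Prop := forall y : B, exists x : A, f x = y.

Record LeibnizAlgebra (K : fieldType) := {
  lvs :> lmodType K;
  lbr : lvs -> lvs -> lvs;
  lbr_linl : forall (a : K) (x y z : lvs), lbr (a *: x + y) z = a *: lbr x z + lbr y z;
  lbr_linr : forall (a : K) (x y z : lvs), lbr z (a *: x + y) = a *: lbr z x + lbr z y;
  lbr_leibniz : forall x y z : lvs, lbr x (lbr y z) = lbr (lbr x y) z - lbr (lbr x z) y
}.

Record LeibnizHom (K : fieldType) (A B : LeibnizAlgebra K) := {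
  lhom_fun :> lvs A -> lvs B;
  lhom_linear : forall (a : K) (x y : lvs A),
      lhom_fun (a *: x + y) = a *: lhom_fun x + lhom_fun y;
  lhom_bracket : forall x y : lvs A,
      lhom_fun (lbr x y) = lbr (lhom_fun x) (lhom_fun y)
}.

Definition in_ann (K : fieldType) (P : LeibnizAlgebra K) (x : lvs P) : Prop :=
  exists s : seq (K * lvs P), x = \sum_(c <- s) c.1 *: lbr c.2 c.2.

Definition in_ZLie (K : fieldType) (P : LeibnizAlgebra K) (z : lvs P) : Prop :=
  forall x : lvs P, lbr x z + lbr z x = 0.

Definition short_exact (K : fieldType) (M P G : LeibnizAlgebra K)
    (i : LeibnizHom M P) (q : LeibnizHom P G) : Prop :=
  injective i /\ surj q /\ (forall x : lvs P, q x = 0 <-> exists m, i m = x).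

(* Lie-stem extension: exact, M (its image) inside Z_Lie(P), and the induced map
   P_Lie = P/P^ann -> G_Lie = G/G^ann is an isomorphism (bijective), written out
   on representatives. *)
Definition lie_stem (K : fieldType) (M P G : LeibnizAlgebra K)
    (i : LeibnizHom M P) (q : LeibnizHom P G) : Prop :=
  short_exact i q /\
  (forall m : lvs M, in_ZLie (i m)) /\
  (forall x y : lvs P, in_ann (q x - q y) -> in_ann (x - y)) /\
  (forall y : lvs G, exists x : lvs P, in_ann (y - q x)).

(* Main.v *)
Require Import Defs.
From mathcomp Require Import all_boot all_algebra.
Import GRing.Theory.
Local Open Scope ring_scope.

Section H.
Variables (K : fieldType) (A B : LeibnizAlgebra K) (f : LeibnizHom A B).

Lemma hD (x y : lvs A) : f (x + y) = f x + f y.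
Proof. by have := lhom_linear f 1 x y; rewrite !scale1r. Qed.

Lemma h0 : f 0 = 0.
Proof. by have := hD 0 0; rewrite addr0 => /esym/eqP; rewrite -subr_eq0 addrK => /eqP. Qed.

Lemma hZ (a : K) (x : lvs A) : f (a *: x) = a *: f x.
Proof. by have := lhom_linear f a x 0; rewrite !addr0 h0 addr0. Qed.

Lemma hB (x y : lvs A) : f (x - y) = f x - f y.
Proof. by rewrite hD -scaleN1r hZ scaleN1r. Qed.
End H.

Lemma brDl (K : fieldType) (P : LeibnizAlgebra K) (x y z : lvs P) :
  lbr (x + y) z = lbr x z + lbr y z.
Proof. by have := lbr_linl 1 x y z; rewrite !scale1r. Qed.

Lemma brDr (K : fieldType) (P : LeibnizAlgebra K) (x y z : lvs P) :
  lbr z (x + y) = lbr z x + lbr z y.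
Proof. by have := lbr_linr 1 x y z; rewrite !scale1r. Qed.

Theorem mainTheorem15 (K : fieldType) (h2 : (2 : K) != 0)
    (g m1 p1 m2 p2 : LeibnizAlgebra K)
    (i1 : LeibnizHom m1 p1) (q1 : LeibnizHom p1 g)
    (i2 : LeibnizHom m2 p2) (q2 : LeibnizHom p2 g)
    (alpha : LeibnizHom m1 m2) (beta : LeibnizHom p1 p2) (gamma : LeibnizHom g g) :
  short_exact i1 q1 ->
  short_exact i2 q2 ->
  (forall x : lvs m1, beta (i1 x) = i2 (alpha x)) ->
  (forall x : lvs p1, q2 (beta x) = gamma (q1 x)) ->
  lie_stem i2 q2 ->
  surj gamma ->
  surj beta.
Proof.
move=> [_ [sq1 _]] [_ [_ ex2]] _ comm [_ [zl [ann _]]] sg.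
have dec : forall v : lvs p2, exists x m, v = beta x + i2 m.
  move=> v; have [y gy] := sg (q2 v); have [x qx] := sq1 y.
  have : q2 (v - beta x) = 0 by rewrite hB comm qx gy subrr.
  case/ex2 => m im; exists x, m; by rewrite im addrC subrK.
have sq0 : forall m, lbr (i2 m) (i2 m) = 0.
  move=> m; have := zl m (i2 m); set w := lbr _ _ => hw.
  have : (2 : K) *: w = 0 by rewrite -[2]/(1 + 1) scalerDl scale1r.
  by move/eqP; rewrite scaler_eq0 (negbTE h2) => /eqP.
have sqim : forall v : lvs p2, exists z, beta z = lbr v v.
  move=> v; have [x [m ->]] := dec v; exists (lbr x x).
  rewrite lhom_bracket !brDl !brDr sq0 addr0.
  have := zl m (beta x); move=> hz.
  by rewrite -(addrA _ (lbr (beta x) (i2 m))) hz addr0.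
move=> y; have [x [m ->]] := dec y.
have [s hs] : in_ann (i2 m - 0).
  apply: ann; have q0 : q2 (i2 m) = 0 by apply/ex2; exists m.
  rewrite q0 (@h0 _ _ _ q2) subrr.
  by exists [::]; rewrite big_nil.
have : exists z, beta z = \sum_(c <- s) c.1 *: lbr c.2 c.2.
  elim: s {hs} => [|c s [r hr]]; first by exists 0; rewrite big_nil h0.
  have [z hz] := sqim c.2; exists (c.1 *: z + r).
  by rewrite big_cons lhom_linear hz hr.
case=> z hz; exists (x + z); by rewrite hD hz -hs subr0.
Qed.
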